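(* Let $(\mathcal F,d)$ be a metric space, $\gamma\in(0,\infty]$, and $\Sigma=(\Sigma_M)_{M\in\mathbb N}$ a sequence of non-empty subsets of $\mathcal F$ which is $\gamma$-encodable. For $\alpha,\beta>0$ let $\mathcal A^\alpha(\mathcal F,\Sigma,\beta)=\{f\in\mathcal F:\sup_{M\ge1}M^\alpha d(f,\Sigma_M)\le\beta\}$, where $d(f,\Sigma_M)=\inf_{g\in\Sigma_M}d(f,g)$, and assume it is non-empty. Then $\gamma^*_e(\mathcal A^\alpha(\mathcal F,\Sigma,\beta))\ge\min(\alpha,\gamma)$.
   Context: A finite $X\subset\mathcal C$ is an $\varepsilon$-covering of $\mathcal C$ if every point of $\mathcal C$ is within distance $\varepsilon$ of some point of $X$; $N(\mathcal C,d,\varepsilon)$ is the minimal size of such a covering ($+\infty$ if none), $H=\log_2N$, and $\gamma^*_e(\mathcal C)=\sup\{\gamma>0:H(\mathcal C,d,\varepsilon)=O(\varepsilon^{-1/\gamma})\text{ as }\varepsilon\to0\}$ ($0$ if empty). For $\gamma,h>0$, a $(\gamma,h)$-encoding of $\Sigma$ is a sequence $(\Sigma(\gamma,h)_M)_M$ such that for some $c_1,c_2>0$ and all $M$, $\Sigma(\gamma,h)_M$ is a $c_1M^{-\gamma}$-covering of $\Sigma_M$ with $\log_2|\Sigma(\gamma,h)_M|\le c_2M^{1+h}$. $\Sigma$ is $\gamma$-encodable if it admits a $(\gamma,h)$-encoding for every $h>0$, and $\infty$-encodable if $\gamma$-encodable for all $\gamma>0$. *)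

(* Defs.v *)
From HB Require Import structures.
From mathcomp Require Import all_boot all_order all_algebra.
From mathcomp Require Import all_classical all_reals all_analysis.
From Stdlib Require List.
Set Implicit Arguments. Unset Strict Implicit. Unset Printing Implicit Defensive.
Import Order.TTheory GRing.Theory Num.Theory.
Local Open Scope classical_set_scope.
Local Open Scope ring_scope.

Section Defs.
Variables (R : realType) (T : Type) (d : T -> T -> R).

Definition is_metric : Prop :=
  (forall x y, 0 <= d x y) /\ (forall x y, d x y = 0 <-> x = y) /\
  (forall x y, d x y = d y x) /\ (forall x y z, d x z <= d x y + d y z).

Definition is_covering (C : set T) (eps : R) (X : seq T) : Prop :=
  (forall x, List.In x X -> C x) /\
  (forall y, C y -> exists2 x, List.In x X & d y x <= eps).

(* covering number N(C,d,eps) (+oo if no finite covering) *)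
Definition covering_number (C : set T) (eps : R) : \bar R :=
  ereal_inf [set ((size X)%:R)%:E | X in [set X | is_covering C eps X]].

Definition metric_entropy (C : set T) (eps : R) : \bar R :=
  match covering_number C eps with
  | r%:E => (ln r / ln 2)%:E
  | +oo%E => +oo%E
  | -oo%E => -oo%E
  end.

Definition entropy_bigO (C : set T) (g : R) : Prop :=
  exists c : R, exists2 e0 : R, 0 < e0 &
    forall eps : R, 0 < eps -> eps < e0 ->
      (metric_entropy C eps <= (c * eps `^ (- g^-1))%:E)%E.

(* optimal exponent gamma*_e(C); the extra 0 realizes "0 if empty" *)
Definition optimal_exponent (C : set T) : \bar R :=
  ereal_sup ([set 0%E] `|`
             [set g%:E | g in [set g : R | 0 < g /\ entropy_bigO C g]]).

Definition encoding (Sigma : nat -> set T) (g h : R) (E : nat -> seq T) : Prop :=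
  exists2 c1 : R, 0 < c1 & exists2 c2 : R, 0 < c2 &
    forall M : nat, (1 <= M)%N ->
      is_covering (Sigma M) (c1 * (M%:R) `^ (- g)) (E M) /\
      ln ((size (E M))%:R) / ln 2 <= c2 * (M%:R) `^ (1 + h).

Definition real_encodable (Sigma : nat -> set T) (g : R) : Prop :=
  forall h : R, 0 < h -> exists E, encoding Sigma g h E.

Definition encodable (Sigma : nat -> set T) (g : \bar R) : Prop :=
  match g with
  | r%:E => real_encodable Sigma r
  | +oo%E => forall r : R, 0 < r -> real_encodable Sigma r
  | -oo%E => False
  end.

Definition dist_set (f : T) (S : set T) : R := inf [set d f x | x in S].

Definition approx_class (Sigma : nat -> set T) (alpha beta : R) : set T :=
  [set f | (ereal_sup [set ((M%:R `^ alpha) * dist_set f (Sigma M))%:E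
                      | M in [set M : nat | (1 <= M)%N]] <= beta%:E)%E].

End Defs.

(* Main.v *)
Require Import Defs.
From HB Require Import structures.
From mathcomp Require Import all_boot all_order all_algebra.
From mathcomp Require Import all_classical all_reals all_analysis.
From mathcomp Require Import lra.
From Stdlib Require List.
Import Order.TTheory GRing.Theory Num.Theory.
Local Open Scope classical_set_scope.
Local Open Scope ring_scope.

Section Aux.
Variables (R : realType) (T : Type) (d : T -> T -> R).

Lemma opt_ge (C : set T) (m : R) :
  0 < m -> (forall g, 0 < g -> g < m -> entropy_bigO d C g) ->
  (m%:E <= optimal_exponent d C)%E.
Proof.
move=> m0 H.
rewrite leNgt; apply/negP => hlt.
have s0 : (0 <= optimal_exponent d C)%E by apply: ereal_sup_ubound; left.
have ub : forall g, 0 < g -> g < m -> (g%:E <= optimal_exponent d C)%E.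
  move=> g g0 gm; apply: ereal_sup_ubound; right; exists g => //; split => //.
  exact: H.
move: s0 hlt ub; case: (optimal_exponent d C) => [r| |] //.
rewrite !lee_fin !lte_fin => r0 rm ub.
have := ub ((r + m) / 2).
rewrite lee_fin.
have h1 : 0 < (r + m) / 2 by lra.
have h2 : (r + m) / 2 < m by lra.
move=> /(_ h1 h2); lra.
Qed.

Lemma In_map (f : T -> T) (s : seq T) x :
  List.In x (map f s) -> exists y, List.In y s /\ x = f y.
Proof.
elim: s => //= a s IH [<-|/IH [y [H1 H2]]]; first by exists a; split => //; left.
by exists y; split => //; right.
Qed.

Lemma In_map2 (f : T -> T) (s : seq T) y :
  List.In y s -> List.In (f y) (map f s).
Proof.
elim: s => //= a s IH [->|H]; first by left.
by right; apply: IH.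
Qed.

Hypothesis dm : is_metric d.

Lemma internal_cover (A : set T) (r : R) (E : seq T) :
  A !=set0 -> (forall y, A y -> exists2 x, List.In x E & d y x <= r) ->
  exists X : seq T, is_covering d A (2 * r) X /\ size X = size E.
Proof.
move=> [f0 Af0] HE.
pose F x := if pselect (exists y, A y /\ d y x <= r) is left H
            then proj1_sig (cid H) else f0.
have FA x : A (F x) /\ ((exists y, A y /\ d y x <= r) -> d (F x) x <= r).
  rewrite /F; case: pselect => [H|H]; last by split => // /H.
  by case: (cid H) => y [Ay dy] /=; split.
exists (map F E); split; last by rewrite size_map.
split.
  by move=> x /In_map [y [_ ->]]; case: (FA y).
move=> y Ay; case: (HE y Ay) => x xE dyx.
exists (F x); first exact: In_map2.
case: dm => [_ [_ [dsym dtri]]].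
have h2 := (FA x).2 (ex_intro _ y (conj Ay dyx)).
apply: le_trans (dtri y x (F x)) _.
rewrite (dsym x (F x)); lra.
Qed.

Lemma cover_mono (C : set T) r r' X :
  is_covering d C r X -> r <= r' -> is_covering d C r' X.
Proof.
move=> [H1 H2] rr; split => // y Cy.
by case: (H2 y Cy) => x xX dx; exists x => //; apply: le_trans rr.
Qed.

Lemma entropy_le (C : set T) eps (X : seq T) (b : R) :
  is_covering d C eps X -> 0 <= b -> ln (size X)%:R / ln 2 <= b ->
  (metric_entropy d C eps <= b%:E)%E.
Proof.
move=> cov b0 hb.
have le1 : (covering_number d C eps <= ((size X)%:R)%:E)%E.
  by apply: ereal_inf_lbound; exists X.
have ge0 : (0 <= covering_number d C eps)%E.
  by apply/ereal_infP => _ [Y _ <-]; rewrite lee_fin.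
rewrite /metric_entropy; move: le1 ge0; case: (covering_number d C eps) => [r| |] //.
rewrite !lee_fin => le1 ge0.
have [->|rn0] := eqVneq r 0; first by rewrite ln0 // mul0r.
have r0 : 0 < r by rewrite lt_neqAle eq_sym rn0.
apply: le_trans hb; apply: ler_wpM2r.
  by rewrite invr_ge0; apply/ltW/ln_gt0; lra.
rewrite ler_ln // posrE //; exact: lt_le_trans le1.
Qed.

End Aux.

Section Core.
Variables (R : realType) (T : Type) (d : T -> T -> R).
Hypothesis dm : is_metric d.

Lemma core (Sigma : nat -> set T) (gp alpha beta g : R) :
  (forall M, (1 <= M)%N -> Sigma M !=set0) -> 0 < gp -> real_encodable d Sigma gp ->
  0 < alpha -> 0 < beta -> approx_class d Sigma alpha beta !=set0 ->
  0 < g -> g < Order.min alpha gp -> entropy_bigO d (approx_class d Sigma alpha beta) g.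
Proof.
move=> Sne gp0 enc a0 b0 Ane g0 gm.
set A := approx_class d Sigma alpha beta.
set a := Order.min alpha gp in gm *.
have apos : 0 < a by rewrite lt_min a0 gp0.
have aa : a <= alpha by rewrite ge_min lexx.
have ag : a <= gp by rewrite ge_min lexx orbT.
set h := a / g - 1.
have h0 : 0 < h by rewrite subr_gt0 ltr_pdivlMr // mul1r.
have h1 : 1 + h = a / g by rewrite /h addrC subrK.
case: (enc h h0) => E [c1 c10 [c2 c20 HE]].
set K := 2 * (2 * beta + c1).
have K0 : 0 < K by rewrite /K; lra.
exists (c2 * 2 `^ (1 + h) * K `^ g^-1); exists K => // eps eps0 epsK.
set t := (K / eps) `^ a^-1.
have Ke1 : 1 <= K / eps by rewrite ler_pdivlMr // mul1r ltW.
have t1 : 1 <= t.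
  rewrite /t -{1}(powRr0 (K / eps)); apply: ler_powR => //.
  by rewrite invr_ge0 ltW.
set M := (Num.truncn t).+1.
have M1 : (1 <= M)%N by [].
have tM : t < M%:R := Num.Theory.truncnS_gt t.
have Mt : M%:R <= t + 1.
  by rewrite /M -addn1 natrD lerD2r truncn_le; lra.
have M1R : 1 <= (M%:R : R) by rewrite ler1n.
have Mae : K / eps <= M%:R `^ a.
  have -> : K / eps = t `^ a.
    by rewrite /t -powRrM mulVf ?gt_eqF // powRr1 // ltW // divr_gt0.
  apply: ge0_ler_powR; rewrite ?nnegrE; try lra; exact: ltW.
have MpowA : K * M%:R `^ (- a) <= eps.
  have Mp : 0 < M%:R `^ a by apply: powR_gt0; lra.
  rewrite powRN ler_pdivrMr //.
  by rewrite mulrC -ler_pdivrMr.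
have pAa : M%:R `^ (- alpha) <= M%:R `^ (- a) by apply: ler_powR => //; lra.
have pga : M%:R `^ (- gp) <= M%:R `^ (- a) by apply: ler_powR => //; lra.
have Mp0 : 0 < M%:R `^ alpha by apply: powR_gt0; lra.
have cov : forall f, A f -> exists2 x, List.In x (E M) &
    d f x <= (2 * beta + c1) * M%:R `^ (- a).
  move=> f Af.
  case: dm => [d0 [_ [dsym dtri]]].
  have hd : M%:R `^ alpha * dist_set d f (Sigma M) <= beta.
    move/ereal_supP: Af => /(_ _ (ex_intro2 _ _ M M1 erefl)).
    by rewrite lee_fin.
  have hd2 : dist_set d f (Sigma M) <= beta * M%:R `^ (- alpha).
    by rewrite powRN ler_pdivlMr // mulrC.
  have pA0 : 0 < M%:R `^ (- alpha) by apply: powR_gt0; lra.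
  have [y [x0 Sx0 <-] yl] : exists2 y, [set d f x | x in Sigma M] y &
      y < dist_set d f (Sigma M) + beta * M%:R `^ (- alpha).
    apply: inf_lt.
      by case: (Sne M M1) => x Sx; exists (d f x); exists x.
    rewrite /dist_set; have := mulr_gt0 b0 pA0; lra.
  case: ((HE M M1).1.2 x0 Sx0) => z zE dz.
  exists z => //.
  have := dtri f x0 z.
  have := ler_wpM2l (ltW b0) pAa.
  have := ler_wpM2l (ltW c10) pga.
  rewrite mulrDl; lra.
have [X [covX sX]] := @internal_cover R T d dm A _ (E M) Ane cov.
have covX' : is_covering d A eps X.
  by apply: cover_mono covX _; rewrite mulrA.
have key : M%:R `^ (1 + h) <= 2 `^ (1 + h) * (K `^ g^-1 * eps `^ (- g^-1)).
  apply: (@le_trans _ _ ((2 * t) `^ (1 + h))).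
    apply: ge0_ler_powR; rewrite ?nnegrE; lra.
  rewrite powRM; [|lra|lra].
  apply: ler_wpM2l; first exact: powR_ge0.
  have -> : t `^ (1 + h) = (K / eps) `^ g^-1.
    rewrite /t -(powRrM (K / eps) a^-1 (1 + h)).
    by rewrite h1 mulrA mulVf ?gt_eqF // mul1r.
  rewrite powRM; [|lra| by rewrite invr_ge0 ltW].
  by rewrite -(powR_inv1 (ltW eps0)) -powRrM mulN1r.
apply: entropy_le covX' _ _.
  apply: mulr_ge0; last exact: powR_ge0.
  apply: mulr_ge0; last exact: powR_ge0.
  apply: mulr_ge0; [exact: ltW|exact: powR_ge0].
rewrite sX; apply: le_trans (HE M M1).2 _.
rewrite -!mulrA; apply: ler_wpM2l; first exact: ltW.
exact: key.
Qed.
End Core.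

Theorem mainTheorem9 (R : realType) (T : Type) (d : T -> T -> R)
  (gamma : \bar R) (Sigma : nat -> set T) (alpha beta : R) :
  is_metric d ->
  (0 < gamma)%E ->
  (forall M : nat, (1 <= M)%N -> Sigma M !=set0) ->
  encodable d Sigma gamma ->
  0 < alpha -> 0 < beta ->
  approx_class d Sigma alpha beta !=set0 ->
  (Order.min alpha%:E gamma <= optimal_exponent d (approx_class d Sigma alpha beta))%E.
Proof.
move=> dm g0 Sne enc a0 b0 Ane.
case: gamma g0 enc => [r| |] //= g0 enc.
- rewrite lte_fin in g0.
  rewrite -EFin_min; apply: opt_ge; first by rewrite lt_min a0 g0.
  by move=> g gpos glt; apply: (@core R T d dm Sigma r alpha beta g).
- rewrite min_l ?leey //; apply: opt_ge => // g gpos glt.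
  by apply: (@core R T d dm Sigma alpha alpha beta g) => //; first exact: enc => //; rewrite minxx.
Qed.
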